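(* Let $V=\mathbb{C}^n$ and let $d>2$. Let $T\in S^d(V)\subset V^{\otimes d}$ be a symmetric tensor. (1) Suppose there exists $k\in\{1,\dots,d-1\}$ such that $\operatorname{rank}(T)\le \operatorname{f-rank}_{[1,\dots,k],[k+1,\dots,d]}(T)$. Then every minimal decomposition of $T$ is symmetric. (2) Let $D=\{a_i\}_i$ be a decomposition of $T$. Assume that for every subset $I\subset\{1,\dots,d\}$ with $|I|=d-2$ the set $D^{(I)}$ is linearly independent. Then $D$ is symmetric.
   Context: A decomposition of $T\in S^d(V)$ is a finite set $D=\{a_i\}_i$ of rank-one tensors $a_i=a_i^{(1)}\otimes\cdots\otimes a_i^{(d)}$ with $a_i^{(k)}\in V$, such that $T=\sum_i a_i$. It is minimal if the number of terms equals $\operatorname{rank}(T)$, the minimal number of rank-one tensors summing to $T$. A decomposition is symmetric if every $a_i$ lies in $S^d(V)$ (i.e. is a symmetric tensor). For $I\subset\{1,\dots,d\}$ with complement $I^C$, $\operatorname{f-rank}_{I,I^C}(T)$ denotes the rank of $T$ viewed as a matrix (element of $(\bigotimes_{j\in I}V)\otimes(\bigotimes_{j\in I^C}V)$) obtained by grouping the indices in $I$ and in $I^C$. For a decomposition $D$, $D^{(I)}=\{\bigotimes_{j\in I}a_i^{(j)}\}_i$. *)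

(* Defs.v *)
From mathcomp Require Import all_boot all_order all_algebra all_fingroup.
From mathcomp Require Import reals complex.
Set Implicit Arguments. Unset Strict Implicit. Unset Printing Implicit Defensive.
Import GRing.Theory.
Local Open Scope ring_scope.

(* A tensor T in V^{(x)d}, V = F^n, is given by its coordinates
   T x, x : {ffun 'I_d -> 'I_n} a multi-index (x k = index in the k-th factor). *)
Definition tensor (F : Type) (n d : nat) := {ffun 'I_d -> 'I_n} -> F.

Definition rank_one (F : comNzRingType) (n d : nat) (f : 'I_d -> 'rV[F]_n)
  : tensor F n d := fun x => \prod_(k < d) f k 0 (x k).

(* Partial product  (x)_{j in I} f j , viewed as a tensor on all d slots that
   depends only on the slots in I (i.e. an element of V^{(x)I}). *)
Definition rank_one_on (F : comNzRingType) (n d : nat) (I : {set 'I_d})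
  (f : 'I_d -> 'rV[F]_n) : tensor F n d := fun x => \prod_(k in I) f k 0 (x k).

Definition symmetric_tensor (F : Type) (n d : nat) (T : tensor F n d) : Prop :=
  forall (s : 'S_d) (x : {ffun 'I_d -> 'I_n}), T [ffun k => x (s k)] = T x.

Definition is_decomposition (F : comNzRingType) (n d r : nat)
  (a : 'I_r -> 'I_d -> 'rV[F]_n) (T : tensor F n d) : Prop :=
  forall x, T x = \sum_(i < r) rank_one (a i) x.

Definition has_decomposition (F : comNzRingType) (n d r : nat) (T : tensor F n d) : Prop :=
  exists a : 'I_r -> 'I_d -> 'rV[F]_n, is_decomposition a T.

Definition tensor_rank (F : comNzRingType) (n d : nat) (T : tensor F n d) (r : nat) : Prop :=
  has_decomposition r T /\ forall r', has_decomposition r' T -> (r <= r')%N.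

Definition symmetric_decomposition (F : comNzRingType) (n d r : nat)
  (a : 'I_r -> 'I_d -> 'rV[F]_n) : Prop :=
  forall i, symmetric_tensor (rank_one (a i)).

(* Its rows/columns are
   indexed by full multi-indices, so rows (columns) with equal restriction to
   I (to I^C) are repeated; the rank is that of the usual flattening. *)
Definition glue (n d : nat) (I : {set 'I_d}) (x y : {ffun 'I_d -> 'I_n})
  : {ffun 'I_d -> 'I_n} := [ffun j => if j \in I then x j else y j].

Definition flattening (F : comNzRingType) (n d : nat) (I : {set 'I_d}) (T : tensor F n d)
  : 'M[F]_(#|{ffun 'I_d -> 'I_n}|, #|{ffun 'I_d -> 'I_n}|) :=
  \matrix_(i, j) T (glue I (enum_val i) (enum_val j)).

Definition frank (F : fieldType) (n d : nat) (I : {set 'I_d}) (T : tensor F n d) : nat :=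
  \rank (flattening I T).

Definition lin_indep_restr (F : comNzRingType) (n d r : nat) (I : {set 'I_d})
  (a : 'I_r -> 'I_d -> 'rV[F]_n) : Prop :=
  forall c : 'I_r -> F,
    (forall x, \sum_(i < r) c i * rank_one_on I (a i) x = 0) -> forall i, c i = 0.

(* Main.v *)
Require Import Defs.
From mathcomp Require Import all_boot all_order all_algebra all_fingroup.
From mathcomp Require Import reals complex.
From mathcomp Require Import zify.
Set Implicit Arguments. Unset Strict Implicit. Unset Printing Implicit Defensive.
Import GRing.Theory.
Local Open Scope ring_scope.

Lemma roo_ext (F : comNzRingType) n d (I : {set 'I_d}) (f : 'I_d -> 'rV[F]_n) (x y : {ffun 'I_d -> 'I_n}) :
  (forall k, k \in I -> x k = y k) -> rank_one_on I f x = rank_one_on I f y.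
Proof. by move=> h; apply: eq_bigr => k kI; rewrite h. Qed.

Lemma ro_split (F : comNzRingType) n d (I : {set 'I_d}) (f : 'I_d -> 'rV[F]_n) (x : {ffun 'I_d -> 'I_n}) :
  rank_one f x = rank_one_on I f x * rank_one_on (~: I) f x.
Proof.
rewrite /rank_one /rank_one_on (bigID (fun k => k \in I)) /=.
by congr (_ * _); apply: eq_bigl => k; rewrite in_setC.
Qed.

Lemma ro_glue (F : comNzRingType) n d (I : {set 'I_d}) (f : 'I_d -> 'rV[F]_n) (x y : {ffun 'I_d -> 'I_n}) :
  rank_one f (glue I x y) = rank_one_on I f x * rank_one_on (~: I) f y.
Proof.
rewrite (ro_split I); congr (_ * _); apply: roo_ext => k.
  by move=> kI; rewrite /glue ffunE kI.
by rewrite in_setC => /negbTE kI; rewrite /glue ffunE kI.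
Qed.

Lemma core (F : comNzRingType) n d r (J : {set 'I_d}) (s : 'S_d)
  (a : 'I_r -> 'I_d -> 'rV[F]_n) (T : tensor F n d) :
  symmetric_tensor T -> is_decomposition a T -> lin_indep_restr J a ->
  (forall k, k \in J -> s k = k) ->
  forall i (x : {ffun 'I_d -> 'I_n}), rank_one (a i) [ffun m => x (s m)] = rank_one (a i) x.
Proof.
move=> hT hD hI hs.
have hK : forall k, k \in ~: J -> s k \in ~: J.
  move=> k; rewrite !in_setC; apply: contra => skJ.
  have := hs _ skJ => /perm_inj <-; exact: skJ.
have key : forall (y : {ffun 'I_d -> 'I_n}) i, rank_one_on (~: J) (a i) [ffun m => y (s m)] =
                       rank_one_on (~: J) (a i) y.
  move=> y.
  pose c i := rank_one_on (~: J) (a i) [ffun m => y (s m)] -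
              rank_one_on (~: J) (a i) y.
  suff h : forall i, c i = 0 by move=> i; apply/eqP; rewrite -subr_eq0; apply/eqP/h.
  apply: hI => x.
  pose z := glue J x y.
  have := hT s z; rewrite !hD => e.
  have e1 : forall i, rank_one (a i) [ffun k => z (s k)] =
     rank_one_on J (a i) x * rank_one_on (~: J) (a i) [ffun m => y (s m)].
    move=> i; rewrite (ro_split J); congr (_ * _); apply: roo_ext => k kJ.
      by rewrite ffunE hs // /z /glue !ffunE kJ.
    have := hK _ kJ; rewrite in_setC => /negbTE skJ.
    by rewrite ffunE /z /glue !ffunE skJ.
  rewrite (eq_bigr _ (fun i _ => e1 i)) in e.
  rewrite (eq_bigr _ (fun i _ => ro_glue J (a i) x y)) in e.
  rewrite /c; under eq_bigr do rewrite mulrBl.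
  rewrite sumrB.
  under eq_bigr do rewrite mulrC.
  under [X in _ - X]eq_bigr do rewrite mulrC.
  by rewrite e subrr.
move=> i x.
rewrite (ro_split J) (ro_split J (a i) x) key; congr (_ * _).
by apply: roo_ext => k kJ; rewrite ffunE hs.
Qed.

Lemma sym_of_tperm (F : Type) n d (f : tensor F n d) :
  (forall (j l : 'I_d) (x : {ffun 'I_d -> 'I_n}), f [ffun k => x (tperm j l k)] = f x) -> symmetric_tensor f.
Proof.
move=> h s; have [ts -> _] := prod_tpermP s.
elim: ts => [|t ts IH] x.
  by rewrite big_nil; congr f; apply/ffunP => k; rewrite ffunE perm1.
rewrite big_cons.
have -> : [ffun k => x ((tperm t.1 t.2 * \prod_(t0 <- ts) tperm t0.1 t0.2)%g k)] =
  [ffun k => [ffun k0 => x ((\prod_(t0 <- ts) tperm t0.1 t0.2)%g k0)] (tperm t.1 t.2 k)].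
  by apply/ffunP => k; rewrite !ffunE permM.
by rewrite h IH.
Qed.

Lemma ro_perm (F : comNzRingType) n d (f : 'I_d -> 'rV[F]_n) (s : 'S_d) (y : {ffun 'I_d -> 'I_n}) :
  rank_one f y = rank_one (fun m => f (s m)) [ffun m => y (s m)].
Proof.
rewrite /rank_one (reindex_inj (@perm_inj _ s)) /=.
by apply: eq_bigr => k _; rewrite ffunE.
Qed.

Lemma decomp_perm (F : comNzRingType) n d r (s : 'S_d)
  (a : 'I_r -> 'I_d -> 'rV[F]_n) (T : tensor F n d) :
  symmetric_tensor T -> is_decomposition a T ->
  is_decomposition (fun i m => a i (s m)) T.
Proof.
move=> hT hD x; rewrite -(hT s^-1%g x) hD; apply: eq_bigr => i _.
rewrite (ro_perm _ s); congr rank_one.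
by apply/ffunP => m; rewrite !ffunE permK.
Qed.

Lemma flat_indep (F : fieldType) n d r (I : {set 'I_d})
  (a : 'I_r -> 'I_d -> 'rV[F]_n) (T : tensor F n d) :
  is_decomposition a T -> (r <= frank I T)%N ->
  lin_indep_restr I a /\ lin_indep_restr (~: I) a.
Proof.
move=> hD hr.
pose N := #|{ffun 'I_d -> 'I_n}|.
pose A : 'M[F]_(N, r) := \matrix_(u, i) rank_one_on I (a i) (enum_val u).
pose B : 'M[F]_(r, N) := \matrix_(i, v) rank_one_on (~: I) (a i) (enum_val v).
have eAB : flattening I T = A *m B.
  apply/matrixP => u v; rewrite !mxE hD; apply: eq_bigr => i _.
  by rewrite !mxE ro_glue.
have fA : row_free A^T.
  rewrite -row_leq_rank mxrank_tr (leq_trans hr) // /frank eAB.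
  exact: mxrankM_maxl.
have fB : row_free B.
  rewrite -row_leq_rank (leq_trans hr) // /frank eAB.
  exact: mxrankM_maxr.
split=> c hc i.
- have : (\row_j c j) *m A^T = 0 *m A^T.
    rewrite mul0mx; apply/rowP => u; rewrite !mxE -[RHS](hc (enum_val u)).
    by apply: eq_bigr => j _; rewrite !mxE.
  by move/(row_free_inj fA)/rowP/(_ i); rewrite !mxE.
- have : (\row_j c j) *m B = 0 *m B.
    rewrite mul0mx; apply/rowP => u; rewrite !mxE -[RHS](hc (enum_val u)).
    by apply: eq_bigr => j _; rewrite !mxE.
  by move/(row_free_inj fB)/rowP/(_ i); rewrite !mxE.
Qed.

Lemma tperm_conj (T : finType) (u v w : T) (m : T) :
  u != v -> u != w -> v != w ->
  tperm u v (tperm u w m) = tperm u w (tperm w v m).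
Proof.
move=> uv uw vw.
case: (tpermP w v m) => [->|->|mw mv].
- by rewrite tpermR tpermL tpermD // eq_sym.
- by rewrite (tpermD uv) 1?eq_sym // !tpermR.
- case: (tpermP u w m) => [_|/mw //|mu _].
  + by rewrite tpermD.
  + by rewrite tpermD //; apply/eqP => e; [apply: mu | apply: mv].
Qed.

Theorem lemma1p1 (R : realType) (n d : nat) (hd : (2 < d)%N) (T : tensor R[i] n d)
  (hT : symmetric_tensor T) :
  (* (1) *)
  (forall k : nat, (1 <= k <= d - 1)%N ->
     forall r : nat, tensor_rank T r ->
     (r <= frank [set j : 'I_d | (j < k)%N] T)%N ->
     forall a : 'I_r -> 'I_d -> 'rV[R[i]]_n,
       is_decomposition a T -> symmetric_decomposition a)
  /\
  (* (2) *)
  (forall (r : nat) (a : 'I_r -> 'I_d -> 'rV[R[i]]_n),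
     is_decomposition a T ->
     (forall I : {set 'I_d}, #|I| = (d - 2)%N -> lin_indep_restr I a) ->
     symmetric_decomposition a).
Proof.
split.
- move=> k _ r _ hr a hD i; apply: sym_of_tperm.
  set P := [set j : 'I_d | (j < k)%N] in hr *.
  have hind : forall b : 'I_r -> 'I_d -> 'rV[R[i]]_n, is_decomposition b T ->
      forall i (j l : 'I_d) (x : {ffun 'I_d -> 'I_n}), ((j \in P) = (l \in P)) ->
      rank_one (b i) [ffun m => x (tperm j l m)] = rank_one (b i) x.
    move=> b hb i0 j l x hjl; have [h1 h2] := flat_indep hb hr.
    case jP : (j \in P).
    + apply: (core hT hb h2) => m; rewrite in_setC => mP.
      by rewrite tpermD //; apply: contraNneq mP => <-; rewrite ?jP -?hjl ?jP.
    + apply: (core hT hb h1) => m mP.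
      by rewrite tpermD //; apply: contraTneq mP => <-; rewrite ?jP -?hjl ?jP.
  have cross : forall j l : 'I_d, j \in P -> l \notin P -> forall x : {ffun 'I_d -> 'I_n},
      rank_one (a i) [ffun m => x (tperm j l m)] = rank_one (a i) x.
    move=> j l jP lP x.
    have jl : j != l by apply: contraNneq lP => <-.
    case: (boolP [exists p, (p \in P) && (p != j)]) => [/existsP[p /andP[pP pj]]|nP].
      pose s := tperm l p.
      have hb := decomp_perm s hT hD.
      have lp : l != p by apply: contraNneq lP => ->.
      rewrite (ro_perm _ s) (ro_perm _ s x).
      have -> : [ffun m => [ffun m0 => x (tperm j l m0)] (s m)] =
                [ffun m => [ffun m0 => x (s m0)] (tperm p j m)].
        have jp : j != p by rewrite eq_sym.
        have lj : l != j by rewrite eq_sym.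
        by apply/ffunP => m; rewrite !ffunE tpermC tperm_conj.
      by apply: (hind _ hb i p j [ffun m0 => x (s m0)]); rewrite pP jP.
    case: (boolP [exists q, (q \notin P) && (q != l)]) => [/existsP[q /andP[qP ql]]|nQ].
      pose s := tperm j q.
      have hb := decomp_perm s hT hD.
      have jq : j != q by apply: contraNneq qP => <-.
      rewrite (ro_perm _ s) (ro_perm _ s x).
      have -> : [ffun m => [ffun m0 => x (tperm j l m0)] (s m)] =
                [ffun m => [ffun m0 => x (s m0)] (tperm q l m)].
        have lq : l != q by rewrite eq_sym.
        by apply/ffunP => m; rewrite !ffunE tperm_conj.
      by apply: (hind _ hb i q l [ffun m0 => x (s m0)]); rewrite (negbTE qP) (negbTE lP).
    exfalso.
    have c1 : (#|P| <= 1)%N.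
      rewrite -(cards1 j); apply: subset_leq_card; apply/subsetP => p pP.
      rewrite inE; apply: contraR nP => pj; apply/existsP; exists p; by rewrite pP.
    have c2 : (#|~: P| <= 1)%N.
      rewrite -(cards1 l); apply: subset_leq_card; apply/subsetP => p pP.
      rewrite inE; apply: contraR nQ => pl; apply/existsP; exists p.
      by rewrite -in_setC pP.
    have := cardsC P; rewrite card_ord => e.
    by move: hd; rewrite -e; move: c1 c2; clear; lia.
  move=> j l x.
  case jP : (j \in P); case lP : (l \in P).
  + by apply: (hind _ hD); rewrite jP lP.
  + by apply: cross; rewrite ?jP ?lP.
  + rewrite tpermC; apply: cross; by rewrite ?jP ?lP.
  + by apply: (hind _ hD); rewrite jP lP.
- move=> r a hD hI i; apply: sym_of_tperm => j l x.
  have [->|jl] := eqVneq j l.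
    by congr rank_one; apply/ffunP => m; rewrite ffunE tperm1 perm1.
  have hc : #|~: [set j; l]| = (d - 2)%N.
    have := cardsC [set j; l]; rewrite card_ord cards2 jl /=.
    move: (#|~: [set j; l]|) => c e.
    by rewrite -[X in _ = (X - 2)%N]e addKn.
  apply: (core hT hD (hI _ hc)) => m; rewrite !inE negb_or => /andP[mj ml].
  by rewrite tpermD // eq_sym.
Qed.
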